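(* Let \[ q_1 = \tfrac{1}{3}(-1, 2, 2)^T,\quad q_2 = \tfrac13 (2,-1,2)^T,\quad q_3 = \tfrac13 (2,2,-1)^T \in \mathbb{R}^3 . \] For every $z \in \{\pm1\}^3$ whose entries are not all equal and every real $3\times 3$ diagonal matrix $X$, \[ \Big\| X + \sum_{i=1}^3 z(i)\, q_i q_i^{T} \Big\| \geq 1, \] where $\|\cdot\|$ denotes the operator norm (induced by the Euclidean norm). *)

(* Defs.v *)
From HB Require Import structures.
From mathcomp Require Import all_boot all_order all_algebra.
From mathcomp Require Import all_classical all_reals.
Set Implicit Arguments. Unset Strict Implicit. Unset Printing Implicit Defensive.
Import Order.TTheory GRing.Theory Num.Theory.
Local Open Scope ring_scope.
Local Open Scope classical_set_scope.

Definition enorm (R : realType) (n : nat) (v : 'cV[R]_n) : R :=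
  Num.sqrt (\sum_(i < n) v i 0 ^+ 2).

Definition opnorm (R : realType) (m n : nat) (A : 'M[R]_(m, n)) : R :=
  sup [set enorm (A *m v) | v in [set v : 'cV[R]_n | enorm v = 1]].

Definition qvec (R : realType) (i : 'I_3) : 'cV[R]_3 :=
  \col_(j < 3) ((if j == i then -1 else 2) / 3).

(* Main.v *)
Require Import Defs.
From HB Require Import structures.
From mathcomp Require Import all_boot all_order all_algebra.
From mathcomp Require Import all_classical all_reals.
From mathcomp Require Import ring lra.
Import Order.TTheory GRing.Theory Num.Theory.
Local Open Scope ring_scope.

Section Aux.
Variable R : realType.

Definition i0 : 'I_3 := @Ordinal 3 0 isT.
Definition i1 : 'I_3 := @Ordinal 3 1 isT.
Definition i2 : 'I_3 := @Ordinal 3 2 isT.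

Lemma sum3 (F : 'I_3 -> R) : \sum_(i < 3) F i = F i0 + F i1 + F i2.
Proof.
rewrite !big_ord_recr big_ord0 /=.
congr (_ + _ + _); last (by congr F; apply: val_inj); last (by congr F; apply: val_inj).
rewrite GRing.add0r. by congr F; apply: val_inj.
Qed.

Lemma cs3 (a0 a1 a2 b0 b1 b2 : R) :
  (a0*b0+a1*b1+a2*b2)^+2 <= (a0^+2+a1^+2+a2^+2)*(b0^+2+b1^+2+b2^+2).
Proof.
rewrite -subr_ge0.
have -> : (a0^+2+a1^+2+a2^+2)*(b0^+2+b1^+2+b2^+2) - (a0*b0+a1*b1+a2*b2)^+2
  = (a0*b1-a1*b0)^+2 + (a0*b2-a2*b0)^+2 + (a1*b2-a2*b1)^+2 by ring.
by rewrite !addr_ge0 ?sqr_ge0.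
Qed.

Lemma mulmx3 (M : 'M[R]_3) (v : 'cV[R]_3) i :
  (M *m v) i 0 = M i i0 * v i0 0 + M i i1 * v i1 0 + M i i2 * v i2 0.
Proof. by rewrite mxE sum3. Qed.

Definition sq (v : 'cV[R]_3) := v i0 0 ^+ 2 + v i1 0 ^+ 2 + v i2 0 ^+ 2.
Definition qf (M : 'M[R]_3) (v : 'cV[R]_3) :=
  v i0 0 * (M *m v) i0 0 + v i1 0 * (M *m v) i1 0 + v i2 0 * (M *m v) i2 0.

Lemma enormE (v : 'cV[R]_3) : enorm v = Num.sqrt (sq v).
Proof. by rewrite /enorm sum3. Qed.

Lemma sq_ge0 v : 0 <= sq v.
Proof. by rewrite /sq !addr_ge0 ?sqr_ge0. Qed.

Lemma bounded (M : 'M[R]_3) :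
  has_ubound ([set enorm (M *m v) | v in [set v : 'cV[R]_3 | enorm v = 1]])%classic.
Proof.
pose K := \sum_(i < 3) \sum_(j < 3) M i j ^+ 2.
exists (Num.sqrt K) => _ [v /= hv <-].
rewrite enormE; apply: ler_wsqrtr.
have h1 : sq v = 1.
  by move: hv; rewrite enormE => /(congr1 (fun x => x ^+ 2)); rewrite sqr_sqrtr ?sq_ge0 // expr1n.
rewrite /K !sum3 /sq !mulmx3.
move: h1; rewrite /sq => h1.
have c0 := cs3 (M i0 i0) (M i0 i1) (M i0 i2) (v i0 0) (v i1 0) (v i2 0).
have c1 := cs3 (M i1 i0) (M i1 i1) (M i1 i2) (v i0 0) (v i1 0) (v i2 0).
have c2 := cs3 (M i2 i0) (M i2 i1) (M i2 i2) (v i0 0) (v i1 0) (v i2 0).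
rewrite h1 !mulr1 in c0 c1 c2.
lra.
Qed.

Lemma key (M : 'M[R]_3) (v : 'cV[R]_3) :
  0 < sq v -> sq v <= `|qf M v| -> 1 <= opnorm M.
Proof.
move=> hpos hq.
set c := Num.sqrt (sq v).
have cpos : 0 < c by rewrite sqrtr_gt0.
have cc : c * c = sq v by rewrite -expr2 sqr_sqrtr // ltW.
pose w := c^-1 *: v.
have hMv : c <= enorm (M *m v).
  rewrite enormE.
  have cs := cs3 (v i0 0) (v i1 0) (v i2 0) ((M *m v) i0 0) ((M *m v) i1 0) ((M *m v) i2 0).
  rewrite -/(sq v) -/(qf M v) in cs.
  set m := (M *m v) i0 0 ^+ 2 + _ + _ in cs *.
  have hq2 : (sq v)^+2 <= (qf M v)^+2.
    have e : `|qf M v| ^+ 2 = qf M v ^+2 := real_normK (num_real _).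
    rewrite -e !expr2; apply: ler_pM => //; exact: sq_ge0.
  have hm2 : sq v <= m.
    have h3 : sq v * sq v <= sq v * m by rewrite -expr2; apply: le_trans hq2 cs.
    by rewrite -(ler_pM2l hpos).
  by rewrite /c ler_sqrt // (le_trans (ltW hpos) hm2).
have hw : enorm w = 1.
  rewrite enormE /sq /w !mxE !exprMn -!mulrDr -/(sq v) -cc.
  rewrite exprVn expr2 mulVf ?sqrtr1 // mulf_neq0 // gt_eqF //.
have hMw : enorm (M *m w) = c^-1 * enorm (M *m v).
  rewrite /w -scalemxAr !enormE /sq !mxE !exprMn -!mulrDr sqrtrM ?sqrtr_sqr.
    by rewrite ger0_norm // invr_ge0 ltW.
  by rewrite sqr_ge0.
have hin : ([set enorm (M *m u) | u in [set u : 'cV[R]_3 | enorm u = 1]])%classic (enorm (M *m w)) by exists w.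
have h := ub_le_sup (bounded M) hin.
have h2 : 1 <= enorm (M *m w) by rewrite hMw ler_pdivlMl // mulr1.
exact: (le_trans h2 h).
Qed.


Lemma finish (M : 'M[R]_3) (a b p : 'cV[R]_3) :
  sq a = 2 -> sq b = 18 -> sq p = 9 ->
  (7/2 * qf M a + 1/18 * qf M b - 8/9 * qf M p = 16 \/
   7/2 * qf M a + 1/18 * qf M b - 8/9 * qf M p = -16) ->
  1 <= opnorm M.
Proof.
move=> ha hb hp hid.
case: (lerP (sq a) `|qf M a|) => h1; first by apply: (@key M a _ h1); rewrite ha.
case: (lerP (sq b) `|qf M b|) => h2; first by apply: (@key M b _ h2); rewrite hb.
case: (lerP (sq p) `|qf M p|) => h3; first by apply: (@key M p _ h3); rewrite hp.
rewrite ha hb hp in h1 h2 h3.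
move: h1 h2 h3; rewrite !ltr_norml => /andP[h1 h1'] /andP[h2 h2'] /andP[h3 h3'].
exfalso; lra.
Qed.

Definition col3 (a b c : R) : 'cV[R]_3 :=
  \col_(j < 3) (if j == i0 then a else if j == i1 then b else c).

Lemma sq_col3 a b c : sq (col3 a b c) = a^+2 + b^+2 + c^+2.
Proof. by rewrite /sq !mxE. Qed.

Lemma qf_col3 (M : 'M[R]_3) a b c : qf M (col3 a b c) =
  a * (M i0 i0 * a + M i0 i1 * b + M i0 i2 * c) +
  b * (M i1 i0 * a + M i1 i1 * b + M i1 i2 * c) +
  c * (M i2 i0 * a + M i2 i1 * b + M i2 i2 * c).
Proof. by rewrite /qf !mulmx3 !mxE. Qed.

Definition qc (k i : 'I_3) : R := (if i == k then -1 else 2) / 3.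

Lemma Ment (X : 'M[R]_3) (z : 'I_3 -> R) i j :
  (X + \sum_(k < 3) z k *: (qvec R k *m (qvec R k)^T)) i j =
  X i j + (z i0 * (qc i0 i * qc i0 j) + z i1 * (qc i1 i * qc i1 j) + z i2 * (qc i2 i * qc i2 j)).
Proof.
rewrite !mxE summxE sum3 !mxE !big_ord1 !mxE //.
Qed.

End Aux.

Theorem lemma5 (R : realType) (z : 'I_3 -> R) (X : 'M[R]_3)
  (hz : forall i, z i = 1 \/ z i = -1)
  (hneq : ~ (forall i j, z i = z j))
  (hX : is_diag_mx X) :
  1 <= opnorm (X + \sum_(i < 3) z i *: (qvec R i *m (qvec R i)^T)).
Proof.
set M := X + _.
have E := Ment R X z.
have Ei : forall i : 'I_3, i = i0 \/ i = i1 \/ i = i2.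
  case=> [[|[|[|?]]] p]; [left|right;left|right;right|]; try exact: val_inj; done.
move/is_diag_mxP: hX => hX.
have x01 : X i0 i1 = 0 by apply: hX.
have x02 : X i0 i2 = 0 by apply: hX.
have x10 : X i1 i0 = 0 by apply: hX.
have x12 : X i1 i2 = 0 by apply: hX.
have x20 : X i2 i0 = 0 by apply: hX.
have x21 : X i2 i1 = 0 by apply: hX.
have [e0|e0] := hz i0; have [e1|e1] := hz i1; have [e2|e2] := hz i2.
- exfalso; apply: hneq => i j.
  by case: (Ei i) => [->|[->|->]]; case: (Ei j) => [->|[->|->]]; rewrite ?e0 ?e1 ?e2.
- apply: (@finish R _ (col3 R 1 (-1) 0) (col3 R 1 1 4) (col3 R 2 2 (-1)));
    rewrite ?sq_col3 ?qf_col3 ?E ?x01 ?x02 ?x10 ?x12 ?x20 ?x21 ?e0 ?e1 ?e2 /qc /=; try lra.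
- apply: (@finish R _ (col3 R 1 0 (-1)) (col3 R 1 4 1) (col3 R 2 (-1) 2));
    rewrite ?sq_col3 ?qf_col3 ?E ?x01 ?x02 ?x10 ?x12 ?x20 ?x21 ?e0 ?e1 ?e2 /qc /=; try lra.
- apply: (@finish R _ (col3 R 0 1 (-1)) (col3 R 4 1 1) (col3 R (-1) 2 2));
    rewrite ?sq_col3 ?qf_col3 ?E ?x01 ?x02 ?x10 ?x12 ?x20 ?x21 ?e0 ?e1 ?e2 /qc /=; try lra.
- apply: (@finish R _ (col3 R 0 1 (-1)) (col3 R 4 1 1) (col3 R (-1) 2 2));
    rewrite ?sq_col3 ?qf_col3 ?E ?x01 ?x02 ?x10 ?x12 ?x20 ?x21 ?e0 ?e1 ?e2 /qc /=; try lra.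
- apply: (@finish R _ (col3 R 1 0 (-1)) (col3 R 1 4 1) (col3 R 2 (-1) 2));
    rewrite ?sq_col3 ?qf_col3 ?E ?x01 ?x02 ?x10 ?x12 ?x20 ?x21 ?e0 ?e1 ?e2 /qc /=; try lra.
- apply: (@finish R _ (col3 R 1 (-1) 0) (col3 R 1 1 4) (col3 R 2 2 (-1)));
    rewrite ?sq_col3 ?qf_col3 ?E ?x01 ?x02 ?x10 ?x12 ?x20 ?x21 ?e0 ?e1 ?e2 /qc /=; try lra.
- exfalso; apply: hneq => i j.
  by case: (Ei i) => [->|[->|->]]; case: (Ei j) => [->|[->|->]]; rewrite ?e0 ?e1 ?e2.
Qed.
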